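(* Let $q$ be a prime power and $h\geq 2$. Let $\vec u,\vec v,\vec w$ be three $\mathbb{F}_{q^h}$-linearly independent vectors in $\mathbb{F}_{q^h}^3$, and let $f:\mathbb{F}_{q^h}\to\mathbb{F}_q$ be a nonzero $\mathbb{F}_q$-linear functional. Define $U=\{x\vec u+f(x)\vec v+y\vec w : x\in\mathbb{F}_{q^h},\ y\in\mathbb{F}_q\}$. Then $\mathcal{L}_U$ is a blocking set of $\mathrm{PG}(2,q^h)$ of size $q^h+q^{h-1}+1$.
   Context: For an $\mathbb{F}_q$-subspace $U$ of $\mathbb{F}_{q^h}^3$, $\mathcal{L}_U=\{\langle\vec z\rangle_{\mathbb{F}_{q^h}} : \vec z\in U\setminus\{0\}\}$, viewed as a set of points of $\mathrm{PG}(2,q^h)$. A blocking set is a point set meeting every line. *)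

(* Defs.v *)
From HB Require Import structures.
From mathcomp Require Import all_boot all_order all_algebra all_field.
Set Implicit Arguments. Unset Strict Implicit. Unset Printing Implicit Defensive.
Import GRing.Theory.
Local Open Scope ring_scope.

(* F plays the role of F_q, L the role of F_{q^h} (a finite-dimensional
   field extension of F). Points of PG(2,L) are 1-dimensional L-subspaces
   of L^3 = 'rV[L]_3, represented canonically by <<z>>%MS; lines are
   2-dimensional subspaces, represented by square matrices of rank 2. *)

Definition inU (F : finFieldType) (L : fieldExtType F) (f : L -> F)
  (u v w : 'rV[L]_3) (z : 'rV[L]_3) : Prop :=
  exists (x : L) (y : F), z = x *: u + (f x)%:A *: v + (y%:A : L) *: w.

Definition LU (F : finFieldType) (L : fieldExtType F) (f : L -> F)
  (u v w : 'rV[L]_3) (P : 'M[L]_3) : Prop :=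
  exists z : 'rV[L]_3, inU f u v w z /\ z != 0 /\ P = <<z>>%MS.

Definition blocking_set (L : fieldType) (S : 'M[L]_3 -> Prop) : Prop :=
  forall l : 'M[L]_3, \rank l = 2%N ->
    exists P : 'M[L]_3, S P /\ (P <= l)%MS.

Definition has_size (L : fieldType) (S : 'M[L]_3 -> Prop) (n : nat) : Prop :=
  exists s : seq 'M[L]_3, [/\ uniq s, (forall P, P \in s <-> S P) & size s = n].

(* Main.v *)
Require Import Defs.
From HB Require Import structures.
From mathcomp Require Import all_boot all_order all_algebra all_field.
Import GRing.Theory.
Local Open Scope ring_scope.
Section S.
Variables (F : finFieldType) (L : fieldExtType F) (u v w : 'rV[L]_3) (f : L -> F).
Hypothesis free : row_free (col_mx u (col_mx v w)).
Hypothesis flin : forall (a : F) (x y : L), f (a *: x + y) = a * f x + f y.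

Lemma f0 : f 0 = 0.
Proof.
have := flin 1 0 0; rewrite scaler0 addr0 mul1r => H.
by apply: (addrI (f 0)); rewrite addr0 -H.
Qed.

Lemma fZ a x : f (a *: x) = a * f x.
Proof. by have := flin a x 0; rewrite !addr0 f0 addr0. Qed.

Lemma fD x y : f (x + y) = f x + f y.
Proof. by have := flin 1 x y; rewrite scale1r mul1r. Qed.

Lemma fB x y : f (x - y) = f x - f y.
Proof. by have := flin (-1) y x; rewrite scaleN1r mulN1r addrC [_ + f x]addrC. Qed.

Definition vec (a b c : L) := a *: u + b *: v + c *: w.

Lemma vec_eq0 a b c : vec a b c = 0 -> [/\ a = 0, b = 0 & c = 0].
Proof.
move=> H.
have E: vec a b c = row_mx (a%:M : 'M_1) (row_mx (b%:M : 'M_1) (c%:M : 'M_1)) *m col_mx u (col_mx v w).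
  by rewrite !mul_row_col !mul_scalar_mx addrA.
have := H; rewrite E -(mul0mx 1 (col_mx u (col_mx v w))) => /(row_free_inj free) /eqP.
rewrite !row_mx_eq0 => /and3P[/eqP A /eqP B /eqP C].
split.
- by have := congr1 (fun M : 'M_1 => M 0 0) A; rewrite !mxE.
- by have := congr1 (fun M : 'M_1 => M 0 0) B; rewrite !mxE.
- by have := congr1 (fun M : 'M_1 => M 0 0) C; rewrite !mxE.
Qed.

Lemma vecD a b c a' b' c' : vec a b c + vec a' b' c' = vec (a + a') (b + b') (c + c').
Proof. by rewrite /vec !scalerDl addrACA [X in X + _ = _]addrACA. Qed.

Lemma vecN a b c : - vec a b c = vec (- a) (- b) (- c).
Proof. by rewrite /vec !opprD !scaleNr. Qed.

Lemma vec_inj a b c a' b' c' : vec a b c = vec a' b' c' -> [/\ a = a', b = b' & c = c'].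
Proof.
move=> /eqP; rewrite -subr_eq0 => /eqP H.
have : vec (a - a') (b - b') (c - c') = 0.
  by rewrite -H vecN vecD.
by case/vec_eq0 => /eqP; rewrite subr_eq0 => /eqP -> /eqP; rewrite subr_eq0 => /eqP -> /eqP; rewrite subr_eq0 => /eqP ->.
Qed.

Lemma vecZ k a b c : k *: vec a b c = vec (k * a) (k * b) (k * c).
Proof. by rewrite /vec !scalerDr !scalerA. Qed.

Lemma vec_neq0 a b c : vec a b c != 0 -> (a != 0) || (b != 0) || (c != 0).
Proof. Abort.

Lemma pt_eq a b c a' b' c' : <<vec a b c>>%MS = <<vec a' b' c'>>%MS ->
  exists k, [/\ a = k * a', b = k * b' & c = k * c'].
Proof.
move=> E.
have : (vec a b c <= vec a' b' c')%MS.
  by rewrite -genmxE E genmxE.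
case/sub_rVP => k; rewrite vecZ => /vec_inj [-> -> ->]; by exists k.
Qed.

Lemma pt_scale k a b c : k != 0 -> <<vec (k * a) (k * b) (k * c)>>%MS = <<vec a b c>>%MS.
Proof. by move=> k0; rewrite -vecZ; apply: eq_genmx; apply: eqmx_scale. Qed.


Let T := finvect_type L.
Lemma cardT : #|T| = (#|F| ^ \dim {:L})%N.
Proof. have := @card_vspacef F T (Vector.class L). move=> <-. by rewrite card_vspace. Qed.

Definition Kset : {set T} := [set x : T | f x == 0].

Lemma cardK (e : L) : f e = 1 -> (0 < \dim {:L})%N ->
  #|Kset| = (#|F| ^ (\dim {:L}).-1)%N.
Proof.
move=> fe dpos.
pose phi (p : T * F) : T := p.2 *: (e : L) + (p.1 : L).
have fphi p : f (phi p) = p.2 + f p.1 by rewrite /phi flin fe mulr1.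
have im : phi @: setX Kset [set: F] = [set: T].
  apply/setP => x; rewrite inE; apply/imsetP; exists ((x : L) - f x *: e : T, f x).
    by rewrite !inE /= fB fZ fe mulr1 subrr andbT.
  by rewrite /phi /= addrC subrK.
have : #|T| = (#|Kset| * #|F|)%N.
  rewrite -cardsT -im card_in_imset ?cardsX ?cardsT //.
  move=> [k1 t1] [k2 t2]; rewrite !inE /= => /andP[/eqP k1K _] /andP[/eqP k2K _] E.
  have := congr1 f E; rewrite !fphi /= k1K k2K !addr0 => tE.
  by move: E; rewrite /phi /= tE => /addrI ->.
rewrite cardT -(prednK dpos) expnS mulnC => /eqP.
rewrite eqn_pmul2r; first by move/eqP.
by apply/card_gt0P; exists 0.
Qed.

Lemma LUP P : LU f u v w P <-> exists x y, vec x (f x)%:A y%:A != 0 /\ P = <<vec x (f x)%:A y%:A>>%MS.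
Proof.
split.
  by case=> z [[x [y ->]] [nz ->]]; exists x, y.
by case=> x [y [nz ->]]; exists (vec x (f x)%:A y%:A); split => //; exists x, y.
Qed.

Definition pts (e : L) : seq 'M[L]_3 := <<vec 1 0 0>>%MS ::
  [seq <<vec (k : L) 0 1>>%MS | k : T in Kset] ++
  [seq <<vec ((p.1 : L) + e) 1 (p.2%:A)>>%MS | p : T * F in setX Kset [set: F]].

Lemma in_alg_inj (a b : F) : (a%:A : L) = b%:A -> a = b.
Proof. exact: (fmorph_inj (in_alg L)). Qed.

Lemma pts_uniq e : uniq (pts e).
Proof.
rewrite /pts cons_uniq mem_cat negb_or cat_uniq; apply/andP; split; [apply/andP; split | apply/and3P; split].
- apply/negP => /imageP [k _] /pt_eq [c [c1 _ c0]]; rewrite mulr1 in c0.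
  by move: c1; rewrite -c0 mul0r => /eqP; rewrite oner_eq0.
- apply/negP => /imageP [k _] /pt_eq [c [c1 c0 _]]; rewrite mulr1 in c0.
  by move: c1; rewrite -c0 mul0r => /eqP; rewrite oner_eq0.
- rewrite map_inj_in_uniq ?enum_uniq // => k1 k2 _ _ /pt_eq [c [E _ c1]].
  by rewrite mulr1 in c1; rewrite E -c1 mul1r.
- apply/hasPn => P /imageP [p _ ->]; apply/negP => /imageP [k _] /pt_eq [c [_ c0 c1]].
  by rewrite mulr0 in c0; move/eqP: c0; rewrite oner_eq0.
- rewrite map_inj_in_uniq ?enum_uniq // => [[k1 t1] [k2 t2]] _ _ /pt_eq [c [E c1 E2]].
  rewrite mulr1 in c1; rewrite -c1 !mul1r /= in E E2.
  by move/addIr: E => ->; rewrite (in_alg_inj _ _ E2).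
Qed.

Lemma algMM (a b : F) : (a%:A : L) * b%:A = (a * b)%:A.
Proof. by rewrite mulr_algl scalerA. Qed.

Lemma alg_neq0 (a : F) : a != 0 -> (a%:A : L) != 0.
Proof. by move=> a0; rewrite scaler_eq0 oner_eq0 orbF. Qed.

Lemma pts_mem e : f e = 1 -> (exists k0 : L, f k0 = 0 /\ k0 != 0) ->
  forall P, P \in pts e <-> LU f u v w P.
Proof.
move=> fe [k0 [fk0 k0nz]] P; apply: iff_trans (iff_sym (LUP P)); split.
- rewrite inE mem_cat => /orP [/eqP -> | /orP [/imageP [k kK ->] | /imageP [[k t] kK ->]]].
  + exists k0, 0; rewrite fk0 !scale0r; split.
      by apply/eqP => /vec_eq0 [k00 _ _]; rewrite k00 eqxx in k0nz.
    by rewrite -(pt_scale k0 1 0 0 k0nz) mulr1 !mulr0.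
  + move: kK; rewrite inE => /eqP fk.
    exists k, 1; rewrite fk scale0r scale1r; split => //.
    by apply/eqP => /vec_eq0 [_ _ /eqP]; rewrite oner_eq0.
  + move: kK; rewrite !inE /= andbT => /eqP fk.
    exists ((k : L) + e), t; rewrite fD fk fe add0r scale1r; split => //.
    by apply/eqP => /vec_eq0 [_ /eqP]; rewrite oner_eq0.
- case=> x [y [nz ->]].
  case: (eqVneq (f x) 0) => fx.
  + case: (eqVneq y 0) => y0.
    * have xnz : x != 0.
        by apply: contraNneq nz => x0; rewrite x0 f0 y0 scale0r /vec !scale0r !addr0.
      rewrite fx y0 scale0r; have -> : <<vec x 0 0>>%MS = <<vec 1 0 0>>%MS by rewrite -(pt_scale x 1 0 0 xnz) mulr1 !mulr0.
      exact: mem_head.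
    * rewrite -(pt_scale (y^-1)%:A _ _ _ (alg_neq0 _ (invr_neq0 y0))) !algMM mulVf // scale1r fx mulr0 scale0r.
      rewrite inE mem_cat; apply/orP; right; apply/orP; left; apply/imageP.
      exists (y^-1 *: x : T); first by rewrite inE fZ fx mulr0.
      by rewrite mulr_algl.
  + rewrite -(pt_scale (f x)^-1%:A _ _ _ (alg_neq0 _ (invr_neq0 fx))) !algMM mulVf // scale1r.
    rewrite inE mem_cat; apply/orP; right; apply/orP; right; apply/imageP.
    exists (((f x)^-1 *: x - e : L) : T, (f x)^-1 * y).
      by rewrite !inE /= andbT fB fZ mulVf // fe subrr.
    by rewrite /= subrK mulr_algl.
Qed.

Lemma blocking : blocking_set (LU f u v w).
Proof.
move=> l rl.
set K := cokermx l.
have mulK x b c : vec x b c *m K = x *: (u *m K) + b *: (v *m K) + c *: (w *m K).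
  by rewrite /vec !mulmxDl -!scalemxAl.
suff [x [y [nz zK]]] : exists x y, vec x (f x)%:A y%:A != 0 /\ vec x (f x)%:A y%:A *m K = 0.
  exists <<vec x (f x)%:A y%:A>>%MS; split.
    by apply/LUP; exists x, y.
  by rewrite genmxE submxE zK.
case: (eqVneq (w *m K) 0) => c0.
  exists 0, 1; rewrite f0 scale0r scale1r; split.
    by apply/eqP => /vec_eq0 [_ _ /eqP]; rewrite oner_eq0.
  by rewrite mulK c0 !scale0r scaler0 !addr0.
have rK : \rank K = 1%N by rewrite mxrank_coker rl.
have cK : (w *m K <= K)%MS := submxMl _ _.
have Kc : (K <= w *m K)%MS by rewrite -(mxrank_leqif_sup cK).2 rank_rV c0 rK.
have [al Hu] : exists al, u *m K = al *: (w *m K).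
  by apply/sub_rVP; apply: submx_trans (submxMl _ _) Kc.
have [be Hv] : exists be, v *m K = be *: (w *m K).
  by apply/sub_rVP; apply: submx_trans (submxMl _ _) Kc.
pose g (x : L) := x * al + (f x)%:A * be.
have gB x1 x2 : g (x1 - x2) = g x1 - g x2.
  by rewrite /g fB scalerBl !mulrBl opprD addrACA.
have g0 : g 0 = 0 by rewrite /g f0 scale0r !mul0r addr0.
have [x [t [xnz gx]]] : exists x : L, exists t : F, x != 0 /\ g x = t%:A.
  case: (boolP [exists x : T, ((x : L) != 0) && (g x == 0)]).
    case/existsP => x /andP [xnz /eqP gx]; exists x, 0; by rewrite scale0r.
  move/existsPn => H.
  have ginj : injective (g : T -> T).
    move=> x1 x2 E; apply/eqP; rewrite -subr_eq0; apply/negPn/negP => ne.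
    by have := H (x1 - x2); rewrite ne /= gB E subrr eqxx.
  have [g' gK g'K] := injF_bij ginj.
  exists (g' 1), 1; rewrite scale1r; split; last exact: g'K.
  apply/eqP => g'0; have := g'K 1; rewrite g'0 g0 => /eqP; by rewrite eq_sym oner_eq0.
exists x, (- t); split.
  by apply/eqP => /vec_eq0 [x0 _ _]; rewrite x0 eqxx in xnz.
rewrite mulK Hu Hv !scalerA -!scalerDl.
have -> : x * al + (f x)%:A * be = t%:A := gx.
by rewrite scaleNr subrr scale0r.
Qed.

End S.


Theorem lemma3p2 (F : finFieldType) (L : fieldExtType F)
  (u v w : 'rV[L]_3) (f : L -> F) :
  (2 <= \dim {:L})%N ->
  row_free (col_mx u (col_mx v w)) ->
  (forall (a : F) (x y : L), f (a *: x + y) = a * f x + f y) ->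
  (exists x : L, f x != 0) ->
  blocking_set (LU f u v w) /\
  has_size (LU f u v w)
    (#|F| ^ \dim {:L} + #|F| ^ (\dim {:L}).-1 + 1)%N.
Proof.
move=> d2 free flin [x0 fx0].
split; first exact: (blocking _ _ _ _ _ _ free flin).
pose e := (f x0)^-1 *: x0.
have fe : f e = 1 by rewrite /e (fZ _ _ _ flin) mulVf.
have dpos : (0 < \dim {:L})%N by apply: leq_trans d2.
have cK := cardK _ _ _ flin _ fe dpos.
have q1 : (1 < #|F|)%N.
  by apply/card_gt1P; exists 0, 1; rewrite eq_sym oner_neq0.
have k0 : exists k0 : L, f k0 = 0 /\ k0 != 0.
  have : ~~ (Kset _ _ f \subset [set 0 : finvect_type L]).
    apply/negP => /subset_leq_card; rewrite cards1 cK leqNgt.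
    have := ltn_exp2l 0 (\dim {:L}).-1 q1; rewrite expn0 => ->.
    by rewrite -ltnS prednK // d2.
  case/subsetPn => k; rewrite !inE => /eqP fk knz; by exists k.
exists (pts _ _ u v w f e); split.
- exact: (pts_uniq _ _ _ _ _ _ free).
- move=> P; exact: (pts_mem _ _ _ _ _ _ free flin _ fe k0).
- rewrite /pts /= size_cat !size_image cardsX cardsT cK.
  have E : (#|F| ^ \dim {:L} = #|F| ^ (\dim {:L}).-1 * #|F|)%N by rewrite -expnSr prednK.
  rewrite E.
  by rewrite addn1 [in LHS]addnC.
Qed.
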